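(* Let $k\ge1$. The Hamming weight enumerator of the linear simplex $\alpha$ code $\mathcal{S}_k^{\alpha}$ (of length $q^{sk}$) is $$W_{\mathcal{S}_k^{\alpha}}(X,Y)=\sum_{j=0}^{s-1}A_{w_j}X^{q^{sk}-w_j}Y^{w_j}+X^{q^{sk}},$$ where $w_j=q^{sk}-q^{s(k-1)+j}$ and $A_{w_j}=q^{k(s-j)}-q^{k((s-j)-1)}$.
   Context: Let $R$ be a finite commutative chain ring: a finite commutative ring with $1\neq0$ whose ideals form a single chain under inclusion. Its unique maximal ideal is principal, generated by some $\gamma$; let $s\ge1$ be the least integer with $\gamma^s=0$ (nilpotency index). The residue field $R/\langle\gamma\rangle$ is isomorphic to $\mathbb{F}_q$, $q$ a prime power. Fix a set $T=\{e_0,\dots,e_{q-1}\}\subseteq R$ of coset representatives of $R/\langle\gamma\rangle$ with $e_0=0$, $e_1=1$, totally ordered by $e_0<e_1<\dots<e_{q-1}$. Every $r\in R$ has a unique representation $r=\sum_{i=0}^{s-1}r_i\gamma^i$ with $r_i\in T$. Order $R$ by: $x>y$ iff $x_i>y_i$ in $T$ for the largest index $i$ with $x_i\neq y_i$ (where $x_i,y_i$ are the digits of $x,y$). List $R=\{\rho_0,\rho_1,\dots,\rho_{q^s-1}\}$ in increasing order (so $\rho_0=0,\rho_1=1$). For $a\in R$ and $m\ge1$, $\mathbf{a}^{(m)}$ denotes the constant vector $(a,\dots,a)\in R^m$. Define matrices $G_k^\alpha$ recursively: $G_1^\alpha=(\rho_0\ \rho_1\ \cdots\ \rho_{q^s-1})$,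 and for $k>1$, $G_k^\alpha$ is the $k\times q^{sk}$ matrix consisting of $q^s$ column blocks, where the $j$-th block ($j=0,\dots,q^s-1$) has first row $\boldsymbol{\rho_j}^{(q^{s(k-1)})}$ and, below it, a copy of $G_{k-1}^\alpha$. The linear simplex $\alpha$ code $\mathcal{S}_k^\alpha$ is the $R$-submodule of $R^{q^{sk}}$ generated by the rows of $G_k^\alpha$. The Hamming weight of $x\in R^n$ is the number of nonzero coordinates; the Hamming weight enumerator of a code $\mathcal{C}$ of length $n$ is $\sum_i A_iX^{n-i}Y^i$ where $A_i$ is the number of codewords of Hamming weight $i$. *)

(* Defs.v *)
From HB Require Import structures.
From mathcomp Require Import all_boot all_order all_algebra.
Set Implicit Arguments. Unset Strict Implicit. Unset Printing Implicit Defensive.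
Import Order.TTheory GRing.Theory Num.Theory.
Local Open Scope ring_scope.

Section ChainRing.
Variable R : finComNzRingType.

Definition is_ideal (I : {set R}) : Prop :=
  [/\ 0 \in I, (forall x y, x \in I -> y \in I -> x + y \in I)
    & (forall r x, x \in I -> r * x \in I)].

Definition chain_ring : Prop :=
  forall I J : {set R}, is_ideal I -> is_ideal J -> (I \subset J) \/ (J \subset I).

Definition maximal_ideal (M : {set R}) : Prop :=
  [/\ is_ideal M, M != [set: R] &
      forall J : {set R}, is_ideal J -> M \subset J -> J = M \/ J = [set: R]].

Definition pideal (g : R) : {set R} := [set x | [exists r : R, x == r * g]].

(* rho c = c-th element of R in increasing order, for c < q^s:
   the element whose gamma-adic digits are e_(c_i), c = sum_i c_i q^i *)
Definition rho (g : R) (s q : nat) (e : nat -> R) (c : nat) : R :=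
  \sum_(i < s) e ((c %/ q ^ i) %% q)%N * g ^+ i.

Fixpoint Gfun (g : R) (s q : nat) (e : nat -> R) (k r c : nat) : R :=
  match k with
  | 0 => 0
  | 1 => rho g s q e c
  | k'.+1 =>
      match r with
      | 0 => rho g s q e (c %/ q ^ (s * k'))%N
      | r'.+1 => Gfun g s q e k' r' (c %% q ^ (s * k'))%N
      end
  end.

Definition Gmat (g : R) (s q : nat) (e : nat -> R) (k : nat)
  : 'M[R]_(k, q ^ (s * k)) :=
  \matrix_(i < k, j < q ^ (s * k)) Gfun g s q e k i j.

Definition simplex_alpha (g : R) (s q : nat) (e : nat -> R) (k : nat)
  : {set 'rV[R]_(q ^ (s * k))} :=
  [set v | [exists u : 'rV[R]_k, v == u *m Gmat g s q e k]].

End ChainRing.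

Definition hweight (R : finComNzRingType) (n : nat) (v : 'rV[R]_n) : nat :=
  #|[set j : 'I_n | v 0 j != 0]|.

(* Hamming weight enumerator sum_i A_i X^(n-i) Y^i in Z[X,Y] = {poly {poly int}},
   X := ('X)%:P (outer constant), Y := 'X (outer variable) *)
Definition PX : {poly {poly int}} := ('X)%:P.
Definition PY : {poly {poly int}} := 'X.

Definition weight_enum (R : finComNzRingType) (n : nat) (C : {set 'rV[R]_n})
  : {poly {poly int}} :=
  \sum_(i < n.+1) (#|[set v in C | hweight v == i]|)%:R * (PX ^+ (n - i) * PY ^+ i).

(* Main.v *)
Require Import Defs.
From HB Require Import structures.
From mathcomp Require Import all_boot all_order all_algebra.
From mathcomp Require Import zify ring.
Import GRing.Theory.
Local Open Scope ring_scope.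

Lemma card_rowA (R : finComNzRingType) k (A : 'I_k -> {set R}) :
  #|[set u : 'rV[R]_k | [forall i, u 0 i \in A i]]| = (\prod_(i < k) #|A i|)%N.
Proof.
pose f (h : {ffun 'I_k -> R}) : 'rV[R]_k := \row_i h i.
have finj : injective f.
  by move=> h h' /matrixP eq; apply/ffunP => i; have := eq 0 i; rewrite !mxE.
have := card_family (fun i : 'I_k => mem (A i)).
rewrite /= foldrE big_map big_enum /= => <-.
rewrite -(card_imset _ finj); apply: eq_card => u.
rewrite inE; apply/forallP/imsetP => [H|[h hh ->] i].
  exists [ffun i => u 0 i].
    by apply/familyP => i; rewrite ffunE; apply: H.
  by apply/rowP => i; rewrite mxE ffunE.
by rewrite mxE; move/familyP: hh; apply.
Qed.

Lemma hw_le (R : finComNzRingType) N (v : 'rV[R]_N) : (hweight v <= N)%N.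
Proof. by rewrite /hweight -[X in (_ <= X)%N](card_ord N) max_card. Qed.

Lemma enum_sum (R : finComNzRingType) N (C : {set 'rV[R]_N}) :
  weight_enum C = \sum_(v in C) PX ^+ (N - hweight v) * PY ^+ hweight v.
Proof.
rewrite /weight_enum (partition_big (fun v : 'rV[R]_N => (inord (hweight v) : 'I_N.+1)) predT) //=.
symmetry. apply: (eq_bigr (fun j : 'I_N.+1 => #|[set v in C | hweight v == j]|%:R * (PX ^+ (N - j) * PY ^+ j))) => j _.
rewrite (eq_bigl (fun i => i \in [set v in C | hweight v == j])); last first.
  move=> v; rewrite !inE; congr (_ && _); rewrite -(inj_eq val_inj) /= inordK // ltnS hw_le //.
rewrite (eq_bigr (fun _ => PX ^+ (N - j) * PY ^+ j)); last first.
  by move=> v; rewrite inE => /andP[_ /eqP <-].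
by rewrite sumr_const mulr_natl.
Qed.

Lemma sum_ind (T : finType) (A : {set T}) :
  \sum_(u : T) ((u \in A)%:R : {poly {poly int}}) = (#|A|%:R).
Proof.
rewrite (_ : #|A|%:R = \sum_(u in A) (1 : {poly {poly int}})); last by rewrite sumr_const.
rewrite [RHS]big_mkcond /=; apply: eq_bigr => u _.
by case: (u \in A).
Qed.

Lemma tele (a : nat -> {poly {poly int}}) n : \sum_(j < n) (a j - a j.+1) = a 0%N - a n.
Proof.
elim: n => [|n IH]; first by rewrite big_ord0 subrr.
by rewrite big_ord_recr /= IH addrA subrK.
Qed.

Section S.
Variable R : finComNzRingType.
Variables (g : R) (s q : nat) (e : nat -> R).
Hypothesis Hmax : maximal_ideal (pideal g).
Hypothesis Hs : (0 < s)%N.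
Hypothesis Hgs : g ^+ s = 0.
Hypothesis Hgt : forall t, (t < s)%N -> g ^+ t != 0.
Hypothesis Hq : (1 < q)%N.
Hypothesis He0 : e 0%N = 0.
Hypothesis Hrep : forall r : R, exists! i, (i < q)%N /\ r - e i \in pideal g.

Lemma inpP x : reflect (exists r, x = r * g) (x \in pideal g).
Proof.
rewrite inE; apply: (iffP existsP) => [[r /eqP ->]|[r ->]]; by exists r.
Qed.

Lemma nilp_unit a : exists b, (1 - a * g) * b = 1.
Proof.
exists (\sum_(i < s) (a * g) ^+ i).
have := subrX1 (a * g) s.
rewrite exprMn Hgs mulr0 => h.
apply: (@oppr_inj _); rewrite -mulNr opprB -h; by rewrite sub0r.
Qed.

Lemma unitP x : x \notin pideal g -> exists y, x * y = 1.
Proof.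
move=> hx.
case: Hmax => [[H0 HD HM] Hne Hm].
pose J := [set z | [exists a, exists b, z == a * g + b * x]].
have HJ : is_ideal J.
  split.
  - rewrite inE; apply/existsP; exists 0; apply/existsP; exists 0.
    by rewrite !mul0r addr0.
  - move=> y z; rewrite !inE => /existsP[a1 /existsP[b1 /eqP->]]
      /existsP[a2 /existsP[b2 /eqP->]].
    apply/existsP; exists (a1 + a2); apply/existsP; exists (b1 + b2).
    apply/eqP; rewrite !mulrDl; rewrite addrACA //.
  - move=> r y; rewrite !inE => /existsP[a1 /existsP[b1 /eqP->]].
    apply/existsP; exists (r * a1); apply/existsP; exists (r * b1).
    by apply/eqP; rewrite mulrDr !mulrA.
have sub : pideal g \subset J.
  apply/subsetP => y /inpP[r ->]; rewrite inE; apply/existsP; exists r.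
  apply/existsP; exists 0; by rewrite mul0r addr0.
have xJ : x \in J.
  rewrite inE; apply/existsP; exists 0; apply/existsP; exists 1.
  by rewrite mul0r add0r mul1r.
case: (Hm J HJ sub) => hJ.
  by move: hx; rewrite -hJ xJ.
have : 1 \in J by rewrite hJ inE.
rewrite inE => /existsP[a /existsP[b /eqP h1]].
have [c hc] := nilp_unit a.
exists (b * c).
have -> : x * (b * c) = (1 - a * g) * c.
  by rewrite [X in (X - _) * _]h1 addrC addKr mulrA (mulrC x).
exact: hc.
Qed.


Lemma absorb m a : g ^+ m = g ^+ m * (a * g) -> g ^+ m = 0.
Proof.
move=> h; have [b hb] := nilp_unit a.
have : g ^+ m * (1 - a * g) = 0 by rewrite mulrBr mulr1 -h subrr.
by move=> h2; rewrite -[g ^+ m]mulr1 -hb mulrA h2 mul0r.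
Qed.

Lemma lt_m (t : nat) : (t < s)%N -> g ^+ t != 0.
Proof. exact: Hgt. Qed.

Lemma q0 : (0 < q)%N. Proof. by apply: ltn_trans Hq. Qed.

Lemma rep_eq d d' : (d < q)%N -> (d' < q)%N -> e d - e d' \in pideal g -> d = d'.
Proof.
move=> hd hd' hm.
have [i [_ hu]] := Hrep (e d).
have h1 := hu d (conj hd (introT (inpP _) (ex_intro _ 0 _))).
rewrite subrr mul0r in h1; have {}h1 := h1 erefl.
by rewrite -h1 (hu d' (conj hd' hm)).
Qed.

Definition rt t c := \sum_(i < t) e ((c %/ q ^ i) %% q)%N * g ^+ i.

Lemma rt0 c : rt 0 c = 0. Proof. by rewrite /rt big_ord0. Qed.

Lemma rt_peel t c : rt t.+1 c = e (c %% q)%N + g * rt t (c %/ q)%N.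
Proof.
rewrite /rt big_ord_recl /= expn0 divn1 expr0 mulr1 mulr_sumr; congr (_ + _).
apply: eq_bigr => i _; rewrite /bump /= add1n expnS divnMA exprS.
by rewrite mulrCA.
Qed.
Lemma rt_surj t r : exists c, (c < q ^ t)%N /\ exists y, r - rt t c = y * g ^+ t.
Proof.
elim: t r => [|t IH] r.
  by exists 0%N; split => //; exists r; rewrite rt0 subr0 expr0 mulr1.
have [d [[hd /inpP[z hz]] _]] := Hrep r.
have [c [hc [y hy]]] := IH z.
exists (c * q + d)%N; split.
  rewrite expnS; move: hc hd; set Q := (q ^ t)%N; nia.
exists y; rewrite rt_peel modnMDl modn_small // divnMDl ?q0 // divn_small // addn0.
by rewrite opprD addrA hz (mulrC z) -mulrBr hy exprS mulrCA.
Qed.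

Lemma rt_inj t : (t <= s)%N -> forall c c', (c < q ^ t)%N -> (c' < q ^ t)%N ->
  g ^+ (s - t) * rt t c = g ^+ (s - t) * rt t c' -> c = c'.
Proof.
elim: t => [|t IH] hts c c'.
  by rewrite expn0 !ltnS !leqn0 => /eqP-> /eqP->.
move=> hc hc'; rewrite !rt_peel.
have hq := q0.
have hm : (s - t = (s - t.+1).+1)%N by rewrite subnSK.
set m := (s - t.+1)%N in hm *.
move=> h.
have hd : e (c %% q) - e (c' %% q) \in pideal g.
  apply/negPn/negP => /(unitP) [y hy].
  have hms : (m < s)%N by rewrite /m; lia.
  have := Hgt m hms.
  move/negP; apply; apply/eqP.
  have h2 : g ^+ m * (e (c %% q) - e (c' %% q)) = g ^+ m * (g * (rt t (c' %/ q) - rt t (c %/ q))).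
    apply/eqP; rewrite -subr_eq0; apply/eqP.
    transitivity (g ^+ m * (e (c %% q) + g * rt t (c %/ q)) - g ^+ m * (e (c' %% q) + g * rt t (c' %/ q))).
      by ring.
    by rewrite h subrr.
  apply: (absorb _ ((rt t (c' %/ q) - rt t (c %/ q)) * y)).
  rewrite -[LHS]mulr1 -hy [LHS]mulrA h2; ring.
have hdd := rep_eq _ _ (ltn_pmod c hq) (ltn_pmod c' hq) hd.
rewrite hdd !mulrDr in h; move/addrI: h => h.
have hdiv : (c %/ q = c' %/ q)%N.
  apply: IH; first exact: ltnW.
  - by rewrite ltn_divLR // -expnSr.
  - by rewrite ltn_divLR // -expnSr.
  by rewrite hm exprSr -!mulrA.
by rewrite (divn_eq c q) (divn_eq c' q) hdiv hdd.
Qed.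

Definition rhoI (c : 'I_(q ^ s)) : R := rt s c.

Lemma rhoI_inj : injective rhoI.
Proof.
move=> c c' h; apply: val_inj.
apply: (@rt_inj s (leqnn s) _ _ (ltn_ord c) (ltn_ord c')).
by rewrite /rhoI in h; rewrite h.
Qed.

Lemma rhoI_surj r : r \in codom rhoI.
Proof.
have [c [hc [y hy]]] := rt_surj s r.
rewrite Hgs mulr0 in hy; move/eqP: hy; rewrite subr_eq0 => /eqP ->.
exact: (codom_f rhoI (Ordinal hc)).
Qed.

Lemma card_R : #|R| = (q ^ s)%N.
Proof.
rewrite -[RHS]card_ord -(card_codom rhoI_inj); apply: eq_card => r.
by rewrite rhoI_surj.
Qed.

Lemma ann_char t v c : (v <= s)%N -> (c < q ^ t)%N ->
  (g ^+ v * rt t c == 0) = (q ^ (s - v) %| c)%N.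
Proof.
have hq := q0.
elim: t v c => [|t IH] v c hv hc.
  by move: hc; rewrite expn0 ltnS leqn0 => /eqP->; rewrite rt0 mulr0 dvdn0 eqxx.
rewrite leq_eqVlt in hv; case/orP: hv => [/eqP->|hv].
  by rewrite Hgs mul0r subnn expn0 dvd1n eqxx.
have hsv : (s - v = (s - v.+1).+1)%N by rewrite subnSK.
rewrite rt_peel mulrDr mulrA -exprSr.
have [hd|hd] := eqVneq (c %% q)%N 0%N.
  rewrite hd He0 mulr0 add0r IH //; last by rewrite ltn_divLR // -expnSr.
  have hqc : (q %| c)%N by rewrite /dvdn hd.
  by rewrite hsv expnSr -{2}(divnK hqc) dvdn_pmul2r.
have hnd : ~~ (q ^ (s - v) %| c)%N.
  apply/negP => hdv; rewrite hsv expnS in hdv.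
  have : (q %| c)%N by apply: dvdn_trans hdv; apply: dvdn_mulr.
  by rewrite /dvdn (negbTE hd).
rewrite (negbTE hnd); apply/negP => /eqP h0.
have hnp : e (c %% q)%N \notin pideal g.
  apply/negP => hp; move: hd; rewrite (rep_eq _ 0 (ltn_pmod c hq) hq) ?eqxx //.
  by rewrite He0 subr0.
have [y hy] := unitP _ hnp.
have := Hgt v hv; move/negP; apply; apply/eqP.
apply: (absorb _ (- (rt t (c %/ q) * y))).
rewrite -[LHS]mulr1 -hy [LHS]mulrA.
have -> : g ^+ v * e (c %% q)%N = - (g ^+ v.+1 * rt t (c %/ q)).
  by apply/eqP; rewrite -addr_eq0 h0.
rewrite exprSr; ring.
Qed.

Definition Ann v := [set x : R | g ^+ v * x == 0].
Definition gI v := [set x : R | [exists r, x == r * g ^+ v]].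

Lemma card_mult v : (v <= s)%N -> #|[set c : 'I_(q ^ s) | q ^ (s - v) %| c]%N| = (q ^ v)%N.
Proof.
move=> hv.
have hsv : (q ^ s = q ^ v * q ^ (s - v))%N by rewrite -expnD subnKC.
have hlt (c : 'I_(q ^ v)) : (c * q ^ (s - v) < q ^ s)%N.
  by rewrite hsv ltn_pmul2r ?expn_gt0 ?q0.
pose f (c : 'I_(q ^ v)) : 'I_(q ^ s) := Ordinal (hlt c).
have finj : injective f.
  move=> c c' /(congr1 val) /= /eqP; rewrite eqn_pmul2r ?expn_gt0 ?q0 //.
  by move/eqP/val_inj.
rewrite -[RHS]card_ord -(card_imset _ finj); apply: eq_card => c.
rewrite inE; apply/idP/imsetP => [hd|[c' _ ->]]; last by rewrite /= dvdn_mull.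
have hc' : (c %/ q ^ (s - v) < q ^ v)%N.
  by rewrite ltn_divLR ?expn_gt0 ?q0 // -hsv.
by exists (Ordinal hc') => //; apply: val_inj; rewrite /= divnK.
Qed.

Lemma card_Ann v : (v <= s)%N -> #|Ann v| = (q ^ v)%N.
Proof.
move=> hv; rewrite -(card_mult _ hv) -(card_imset _ rhoI_inj); apply: eq_card => x.
rewrite inE; have /codomP[c ->] := rhoI_surj x.
rewrite (mem_imset _ _ rhoI_inj) inE /rhoI ann_char //.
Qed.

Lemma card_gI v : (v <= s)%N -> #|gI v| = (q ^ (s - v))%N.
Proof.
move=> hv.
pose phi (x : R) := x * g ^+ v.
have hgI : gI v = [set phi x | x : R].
  apply/setP => y; rewrite inE; apply/existsP/imsetP => [[r /eqP->]|[r _ ->]].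
    by exists r.
  by exists r.
have hfib y : y \in gI v -> #|[set x | phi x == y]| = (q ^ v)%N.
  rewrite inE => /existsP[x0 /eqP->].
  rewrite -(card_Ann _ hv) -[#|Ann v|](card_imset _ (addIr x0)); apply: eq_card => x.
  rewrite inE; apply/eqP/imsetP => [h|[a ha ->]].
    exists (x - x0); last by rewrite subrK.
    by rewrite inE mulrBr !(mulrC (g ^+ v)) [_ * _]h subrr.
  by rewrite /phi mulrDl; move: ha; rewrite inE mulrC => /eqP->; rewrite add0r.
have htot : (q ^ s = #|gI v| * q ^ v)%N.
  rewrite -card_R -[#|R|]sum1_card (partition_big_imset phi) /= -hgI.
  rewrite -sum_nat_const; apply: eq_bigr => y hy.
  rewrite -(hfib y hy) -sum1_card; apply: eq_bigl => x; by rewrite inE.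
have hp : (0 < q ^ v)%N by rewrite expn_gt0 q0.
by apply/eqP; rewrite -(eqn_pmul2r hp) -expnD subnK // -htot.
Qed.

Lemma rt_s_inj c c' : (c < q ^ s)%N -> (c' < q ^ s)%N -> rt s c = rt s c' -> c = c'.
Proof.
move=> hc hc' h; apply: (@rt_inj s (leqnn s) _ _ hc hc').
by rewrite h.
Qed.

Lemma rho_rt c : rho g s q e c = rt s c.
Proof. by []. Qed.

Lemma Gfun_inj k' c c' : (c < q ^ (s * k'.+1))%N -> (c' < q ^ (s * k'.+1))%N ->
  (forall i, (i < k'.+1)%N -> Gfun g s q e k'.+1 i c = Gfun g s q e k'.+1 i c') ->
  c = c'.
Proof.
elim: k' c c' => [|k' IH] c c'.
  rewrite muln1 => hc hc' h; apply: rt_s_inj => //.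
  by have := h 0%N erefl.
set Q := (q ^ (s * k'.+1))%N.
have hQ : (0 < Q)%N by rewrite expn_gt0 q0.
have hS : (q ^ (s * k'.+2) = q ^ s * Q)%N by rewrite /Q -expnD -mulnS.
rewrite hS => hc hc' h.
have h0 : (c %/ Q = c' %/ Q)%N.
  apply: rt_s_inj.
  - by rewrite ltn_divLR // mulnC.
  - by rewrite ltn_divLR // mulnC.
  by have := h 0%N erefl.
have h1 : (c %% Q = c' %% Q)%N.
  apply: IH; rewrite -/Q ?ltn_pmod //.
  by move=> i hi; have := h i.+1 hi.
by rewrite (divn_eq c Q) (divn_eq c' Q) h0 h1.
Qed.

Lemma Gfun_inj' k c c' : (1 <= k)%N -> (c < q ^ (s * k))%N -> (c' < q ^ (s * k))%N ->
  (forall i, (i < k)%N -> Gfun g s q e k i c = Gfun g s q e k i c') -> c = c'.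
Proof. case: k => // k' _; exact: Gfun_inj. Qed.

Section K.
Variable k : nat.
Hypothesis hk : (1 <= k)%N.

Definition colv (c : 'I_(q ^ (s * k))) : 'rV[R]_k := \row_i Gfun g s q e k i c.

Lemma colv_inj : injective colv.
Proof.
move=> c c' h; apply: val_inj; apply: (Gfun_inj' _ _ _ hk (ltn_ord c) (ltn_ord c')).
move=> i hi; have /rowP /(_ (Ordinal hi)) := h; by rewrite !mxE.
Qed.

Lemma card_rV : #|{: 'rV[R]_k}| = (q ^ (s * k))%N.
Proof. by rewrite card_mx card_R mul1n expnM. Qed.

Lemma colv_bij : bijective colv.
Proof. by apply: (inj_card_bij colv_inj); rewrite card_rV card_ord. Qed.

Definition dot (u x : 'rV[R]_k) := \sum_i u 0 i * x 0 i.

Lemma codeE u c : (u *m Gmat g s q e k) 0 c = dot u (colv c).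
Proof. by rewrite !mxE; apply: eq_bigr => i _; rewrite !mxE. Qed.

Lemma card_colv (P : pred 'rV[R]_k) : #|[set c | P (colv c)]| = #|[set x | P x]|.
Proof.
rewrite -(card_imset _ colv_inj); apply: eq_card => x.
apply/imsetP/idP => [[c hc ->]|hx]; first by rewrite inE in hc; rewrite inE.
have [f fK Kf] := colv_bij.
by exists (f x); rewrite ?inE Kf //; rewrite inE in hx.
Qed.

Lemma hw_code u : hweight (u *m Gmat g s q e k) = #|[set x | dot u x != 0]|.
Proof.
rewrite /hweight -(card_colv (fun x => dot u x != 0)); apply: eq_card => c.
by rewrite !inE codeE.
Qed.

Lemma code_inj : injective (fun u : 'rV[R]_k => u *m Gmat g s q e k).
Proof.
move=> u u' /= h; apply/rowP => i.
have [f fK Kf] := colv_bij.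
pose x : 'rV[R]_k := \row_j ((j == i)%:R).
have hx (w : 'rV[R]_k) : dot w (colv (f x)) = w 0 i.
  rewrite Kf /dot (bigD1 i) //= big1 ?addr0; first by rewrite mxE eqxx mulr1.
  by move=> j hj; rewrite mxE (negbTE hj) mulr0.
by rewrite -hx -codeE h codeE hx.
Qed.

Definition L v := [set u : 'rV[R]_k | [forall i, u 0 i \in gI v]].

Lemma card_L v : (v <= s)%N -> #|L v| = (q ^ (k * (s - v)))%N.
Proof.
move=> hv; rewrite card_rowA.
rewrite (eq_bigr (fun _ => q ^ (s - v))%N); last by move=> i _; rewrite card_gI.
by rewrite prod_nat_const card_ord -expnM mulnC.
Qed.

Lemma L0 u : u \in L 0.
Proof.
by rewrite inE; apply/forallP => i; rewrite inE; apply/existsP; exists (u 0 i); rewrite expr0 mulr1.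
Qed.

Lemma LS v u : u \in L v.+1 -> u \in L v.
Proof.
rewrite !inE => /forallP h; apply/forallP => i.
have := h i; rewrite !inE => /existsP[r /eqP ->].
by apply/existsP; exists (r * g); rewrite exprS mulrA.
Qed.

Lemma Ls u : u \in L s -> u = 0.
Proof.
rewrite inE => /forallP h; apply/rowP => i.
have := h i; rewrite !inE => /existsP[r /eqP ->].
by rewrite Hgs mulr0 mxE.
Qed.

Lemma zero_count u v : (v < s)%N -> u \in L v -> u \notin L v.+1 ->
  #|[set x | dot u x == 0]| = (q ^ (s * (k - 1) + v))%N.
Proof.
move=> hv hu hu'.
pose t i := odflt 0 [pick r | u 0 i == r * g ^+ v].
have ht i : u 0 i = t i * g ^+ v.
  move: hu; rewrite inE => /forallP /(_ i); rewrite inE => /existsP[r hr].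
  rewrite /t; case: pickP => [r' /eqP //|hn]; by have := hn r; rewrite hr.
move: hu'; rewrite inE negb_forall => /existsP[m hm].
have htm : t m \notin pideal g.
  apply/negP => /inpP[r hr]; move: hm; rewrite inE; apply/negP; rewrite negbK.
  by apply/existsP; exists r; rewrite ht hr exprS mulrA.
have [w hw] := unitP _ htm.
pose dt (x : 'rV[R]_k) := \sum_i t i * x 0 i.
have hdot x : dot u x = g ^+ v * dt x.
  rewrite /dot /dt mulr_sumr; apply: eq_bigr => i _; rewrite ht; ring.
pose psi (x : 'rV[R]_k) : 'rV[R]_k := \row_i (if i == m then dt x else x 0 i).
have hsplit x : dt x = t m * x 0 m + \sum_(i | i != m) t i * x 0 i.
  by rewrite /dt (bigD1 m).
have psi_inj : injective psi.
  move=> x y /rowP h.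
  have hne i : i != m -> x 0 i = y 0 i.
    by move=> hi; have := h i; rewrite !mxE (negbTE hi).
  have hm' : x 0 m = y 0 m.
    have := h m; rewrite !mxE eqxx !hsplit.
    rewrite (eq_bigr (fun i => t i * y 0 i)); last by move=> i hi; rewrite hne.
    move/addIr => h2.
    by rewrite -[x 0 m]mul1r -[y 0 m]mul1r -hw !(mulrC (t m)) -!mulrA h2.
  apply/rowP => i; case: (eqVneq i m) => [->|hi]; first exact: hm'.
  exact: hne.
pose Z := [set z : 'rV[R]_k | g ^+ v * z 0 m == 0].
have -> : #|[set x | dot u x == 0]| = #|psi @^-1: Z|.
  by apply: eq_card => x; rewrite !inE hdot mxE eqxx.
rewrite (card_preimset _ psi_inj).
pose A (i : 'I_k) : {set R} := if i == m then Ann v else [set: R].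
have -> : #|Z| = #|[set z : 'rV[R]_k | [forall i, z 0 i \in A i]]|.
  apply: eq_card => z; rewrite !inE; apply/idP/forallP => [hz i|hz].
    by rewrite /A; case: (eqVneq i m) => [->|_]; rewrite inE.
  by have := hz m; rewrite /A eqxx inE.
rewrite card_rowA (bigD1 m) // {1}/A eqxx (card_Ann _ (ltnW hv)).
rewrite (eq_bigr (fun _ => q ^ s)%N); last first.
  by move=> i /= hi; rewrite /A (negbTE hi) cardsT card_R.
rewrite prod_nat_const.
have -> : #|[pred i : 'I_k | true && (i != m)]| = k.-1.
  have := cardC1 m; rewrite card_ord => <-; apply: eq_card => i; by rewrite !inE.
rewrite -expnM subn1 expnD; exact: mulnC.
Qed.

Lemma weight_L u v : (v < s)%N -> u \in L v -> u \notin L v.+1 ->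
  hweight (u *m Gmat g s q e k) = (q ^ (s * k) - q ^ (s * (k - 1) + v))%N.
Proof.
move=> hv hu hu'; rewrite hw_code -(zero_count u v hv hu hu') -card_rV.
rewrite -(cardsC [set x | dot u x == 0]) addKn; apply: eq_card => x.
by rewrite !inE.
Qed.

Definition Mw (i : nat) : {poly {poly int}} := PX ^+ (q ^ (s * k) - i) * PY ^+ i.
Definition wj (j : nat) : nat := (q ^ (s * k) - q ^ (s * (k - 1) + j))%N.

Lemma hw0 : hweight (0 : 'rV[R]_(q ^ (s * k))) = 0%N.
Proof.
rewrite /hweight; apply/eqP; rewrite cards_eq0; apply/eqP/setP => c.
by rewrite !inE mxE eqxx.
Qed.

Lemma per_u u : Mw (hweight (u *m Gmat g s q e k)) =
  \sum_(j < s) (((u \in L j)%:R - (u \in L j.+1)%:R) * Mw (wj j))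
  + (u \in L s)%:R * PX ^+ (q ^ (s * k)).
Proof.
set h := hweight _.
transitivity (\sum_(j < s) (((u \in L j)%:R - (u \in L j.+1)%:R) * Mw h)
  + (u \in L s)%:R * Mw h).
  rewrite -mulr_suml -mulrDl (tele (fun j => (u \in L j)%:R)) subrK (L0 u) mul1r //.
congr (_ + _).
  apply: eq_bigr => j _.
  case: (boolP (u \in L j.+1)) => h1.
    by rewrite (LS _ _ h1) subrr !mul0r.
  case: (boolP (u \in L j)) => h0; last by rewrite subrr !mul0r.
  by rewrite /h (weight_L u j (ltn_ord j) h0 h1).
case: (boolP (u \in L s)) => hs; last by rewrite !mul0r.
by rewrite /h (Ls _ hs) mul0mx hw0 /Mw subn0 expr0 mulr1.
Qed.

Lemma main_eq : weight_enum (simplex_alpha g s q e k) =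
    \sum_(j < s)
       ((q ^ (k * (s - j)) - q ^ (k * (s - j - 1)))%N)%:R
       * (PX ^+ (q ^ (s * k) - (q ^ (s * k) - q ^ (s * (k - 1) + j)))%N
          * PY ^+ (q ^ (s * k) - q ^ (s * (k - 1) + j))%N)
    + PX ^+ (q ^ (s * k)).
Proof.
have hC : simplex_alpha g s q e k = [set u *m Gmat g s q e k | u : 'rV[R]_k].
  apply/setP => v; rewrite inE; apply/existsP/imsetP => [[u /eqP->]|[u _ ->]].
    by exists u.
  by exists u.
rewrite enum_sum hC big_imset /=; last by move=> u u' _ _; apply: code_inj.
rewrite (eq_bigr _ (fun u _ => per_u u)) big_split /= exchange_big /=.
congr (_ + _).
  apply: eq_bigr => j _; rewrite -mulr_suml sumrB !sum_ind.
  have e1 : (s - j - 1 = s - j.+1)%N by lia.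
  congr (_ * _); rewrite e1 !card_L ?ltn_ord //; last by apply: ltnW.
  symmetry; apply: (@natrB {poly {poly int}}).
  by rewrite leq_exp2l // leq_mul2l; apply/orP; right; lia.
by rewrite -mulr_suml sum_ind card_L // subnn muln0 expn0 mul1r.
Qed.

End K.

End S.

Theorem theorem3p13 (R : finComNzRingType) (gamma : R) (s q : nat)
  (e : nat -> R) (k : nat) :
  chain_ring R ->
  maximal_ideal (pideal gamma) ->
  (0 < s)%N ->
  gamma ^+ s = 0 ->
  (forall t, (t < s)%N -> gamma ^+ t != 0) ->
  (1 < q)%N -> e 0%N = 0 -> e 1%N = 1 ->
  (forall r : R, exists! i, (i < q)%N /\ r - e i \in pideal gamma) ->
  (1 <= k)%N ->
  weight_enum (simplex_alpha gamma s q e k) =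
    \sum_(j < s)
       ((q ^ (k * (s - j)) - q ^ (k * (s - j - 1)))%N)%:R
       * (PX ^+ (q ^ (s * k) - (q ^ (s * k) - q ^ (s * (k - 1) + j)))%N
          * PY ^+ (q ^ (s * k) - q ^ (s * (k - 1) + j))%N)
    + PX ^+ (q ^ (s * k)).
Proof.
move=> _ Hmax Hs Hgs Hgt Hq He0 _ Hrep hk.
by apply: main_eq.
Qed.
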